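(* Let $\varphi\neq0$ and $\phi$ be real numbers with $\sin^2\phi\neq1$, and $$M_A=\begin{pmatrix} i\cosh\varphi & e^{i\phi}\sinh\varphi\\ e^{-i\phi}\sinh\varphi & -i\cosh\varphi\end{pmatrix},\qquad M_B=\begin{pmatrix} i&0\\0&-i\end{pmatrix}.$$ Let $M_1,M_2,\dots$ be independent random matrices, each equal to $M_A$ or $M_B$ with probability $1/2$, and write $\Pi_n=M_1\cdots M_n=\begin{pmatrix}\alpha_n&\beta_n\\ \beta_n^*&\alpha_n^*\end{pmatrix}$. Then there is a constant $g>0$ (depending on $\varphi,\phi$) such that $$\mathbb{E}\left(\log|\alpha_n-\beta_n|\right)\sim g\sqrt{n}\qquad\text{as } n\to\infty .$$
   Context: $\mathbb{E}$ denotes expectation over the random choices of $M_1,\dots,M_n$. (Physically, $\frac{c}{3}\mathbb{E}(\log|\alpha_n-\beta_n|)$ is the averaged entanglement entropy growth of half of a randomly driven CFT of central charge $c$ at a type I exceptional point.) *)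

(* Defs.v *)
From HB Require Import structures.
From mathcomp Require Import all_boot all_order all_algebra.
From mathcomp Require Import all_classical all_reals all_analysis.
From mathcomp Require Import complex.
Set Implicit Arguments. Unset Strict Implicit. Unset Printing Implicit Defensive.
Import Order.TTheory GRing.Theory Num.Theory.
Local Open Scope ring_scope.
Local Open Scope complex_scope.

Definition cabs (R : realType) (z : R[i]) : R := ComplexField.Normc.normc z.

Definition coshR (R : realType) (x : R) : R := (expR x + expR (- x)) / 2.
Definition sinhR (R : realType) (x : R) : R := (expR x - expR (- x)) / 2.

Definition cexpi (R : realType) (t : R) : R[i] := cos t +i* sin t.

Definition MA (R : realType) (vp ph : R) : 'M[R[i]]_2 :=
  \matrix_(i < 2, j < 2)
    if (i == 0) && (j == 0) then 'i * (coshR vp)%:C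
    else if (i == 0) && (j == 1) then cexpi ph * (sinhR vp)%:C
    else if (i == 1) && (j == 0) then cexpi (- ph) * (sinhR vp)%:C
    else - 'i * (coshR vp)%:C.

Definition MB (R : realType) : 'M[R[i]]_2 :=
  \matrix_(i < 2, j < 2)
    if (i == 0) && (j == 0) then 'i
    else if (i == 1) && (j == 1) then - 'i
    else 0.

(* Pi_n = M_1 ... M_n for the choice sequence s (true = M_A, false = M_B);
   \prod over ordinals multiplies in increasing index order. *)
Definition Pi (R : realType) (vp ph : R) (n : nat) (s : {ffun 'I_n -> bool})
  : 'M[R[i]]_2 :=
  \prod_(k < n) (if s k then MA vp ph else MB R).

Definition alpha (R : realType) (vp ph : R) n (s : {ffun 'I_n -> bool}) : R[i] :=
  Pi vp ph s 0 0.
Definition beta (R : realType) (vp ph : R) n (s : {ffun 'I_n -> bool}) : R[i] :=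
  Pi vp ph s 0 1.

(* E(log|alpha_n - beta_n|): the M_k are independent, each M_A or M_B with
   probability 1/2, so the law of (M_1,...,M_n) is uniform on the 2^n choice
   sequences and the expectation is the uniform average. *)
Definition Elog (R : realType) (vp ph : R) (n : nat) : R :=
  (2 ^+ n)^-1 * \sum_(s : {ffun 'I_n -> bool})
      ln (cabs (alpha vp ph s - beta vp ph s)).

(* Main.v *)
Require Import Defs.
From HB Require Import structures.
From mathcomp Require Import all_boot all_order all_algebra.
From mathcomp Require Import all_classical all_reals all_analysis.
From mathcomp Require Import complex.
From mathcomp Require Import ring lra zify.
Import Order.TTheory GRing.Theory Num.Theory.
Import numFieldNormedType.Exports.
Local Open Scope classical_set_scope.
Local Open Scope ring_scope.
Set Implicit Arguments. Unset Strict Implicit. Unset Printing Implicit Defensive.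

Definition step (st : int * bool) (b : bool) : int * bool :=
  let: (k, p) := st in
  if p then (if b then (k + 1, false) else (k, false))
  else (if b then (k - 1, true) else (k, true)).

Definition Sv (st : int * bool) : int := 2 * st.1 + (nat_of_bool st.2)%:Z.

Definition restr n (s : {ffun 'I_n.+1 -> bool}) : {ffun 'I_n -> bool} :=
  [ffun k => s (widen_ord (leqnSn n) k)].

Definition ext n (s : {ffun 'I_n -> bool}) (b : bool) : {ffun 'I_n.+1 -> bool} :=
  [ffun k => if unlift ord_max k is Some j then s j else b].

Fixpoint walk n : {ffun 'I_n -> bool} -> int * bool :=
  match n return {ffun 'I_n -> bool} -> int * bool with
  | 0 => fun _ => (0, false)
  | n'.+1 => fun s => step (walk (restr s)) (s ord_max)
  end.

Lemma widen_lift n (k : 'I_n) : widen_ord (leqnSn n) k = lift ord_max k.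
Proof. by apply: val_inj; rewrite /= /bump leqNgt ltn_ord. Qed.

Lemma restr_ext n (s : {ffun 'I_n -> bool}) b : restr (ext s b) = s.
Proof.
apply/ffunP => k; rewrite !ffunE widen_lift liftK //.
Qed.

Lemma ext_max n (s : {ffun 'I_n -> bool}) b : ext s b ord_max = b.
Proof. by rewrite ffunE unlift_none. Qed.

Lemma ext_restr n (s : {ffun 'I_n.+1 -> bool}) : ext (restr s) (s ord_max) = s.
Proof.
apply/ffunP => k; rewrite ffunE; case: unliftP => [j ->|->] //.
by rewrite ffunE widen_lift.
Qed.

Lemma walk_ext n (s : {ffun 'I_n -> bool}) b : walk (ext s b) = step (walk s) b.
Proof. by rewrite /= restr_ext ext_max. Qed.

Lemma sum_ffunS (R : zmodType) n (h : {ffun 'I_n.+1 -> bool} -> R) :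
  \sum_(s : {ffun 'I_n.+1 -> bool}) h s =
  \sum_(s : {ffun 'I_n -> bool}) (h (ext s true) + h (ext s false)).
Proof.
rewrite (reindex (fun p : {ffun 'I_n -> bool} * bool => ext p.1 p.2)) /=; last first.
  exists (fun s => (restr s, s ord_max)) => [[s b] _|s _] /=.
    by rewrite restr_ext ext_max.
  by rewrite ext_restr.
rewrite -(pair_big xpredT xpredT (fun s b => h (ext s b))) /=.
by apply: eq_bigr => s _; rewrite big_bool.
Qed.

Lemma step_sum (R : zmodType) (f : int -> R) st :
  f (Sv (step st true)) + f (Sv (step st false)) = f (Sv st + 1) + f (Sv st - 1).
Proof.
case: st => k [] /=; rewrite /Sv /=.
  by congr (f _ + f _); lia.
by rewrite addrC; congr (f _ + f _); lia.
Qed.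

Lemma sum_walk (R : comNzRingType) n (f : int -> R) :
  \sum_(s : {ffun 'I_n -> bool}) f (Sv (walk s)) =
  \sum_(j < n.+1) ('C(n, j))%:R * f (2 * (j : nat)%:Z - (n : nat)%:Z).
Proof.
elim: n f => [|n IH] f.
  rewrite big_ord1 /= mul1r sumr_const card_ffun card_ord card_bool expn0.
  by rewrite /Sv /=.
rewrite sum_ffunS.
under eq_bigr => s _ do rewrite !walk_ext step_sum.
rewrite (IH (fun z => f (z + 1) + f (z - 1))).
rewrite [RHS]big_ord_recl /= bin0 mul1r.
under [in RHS]eq_bigr => j _ do rewrite /bump leq0n add1n binS natrD mulrDl.
rewrite big_split /=.
under eq_bigr => j _ do rewrite mulrDr.
rewrite big_split /= [X in _ = _ + X]addrC [RHS]addrCA; congr (_ + _).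
  by apply: eq_bigr => j _; congr (_ * f _); lia.
rewrite big_ord_recl /= bin0 mul1r big_ord_recr /= bin_small // mul0r addr0.
congr (f _ + _); first lia.
by apply: eq_bigr => j _; rewrite /bump leq0n add1n; congr (_ * f _); lia.
Qed.

Definition absR (R : realType) (z : int) : R := `|(z%:~R : R)|.
Definition Tsum (R : realType) n : R := \sum_(s : {ffun 'I_n -> bool}) absR R (Sv (walk s)).
Definition Zc (R : realType) n : R := \sum_(s : {ffun 'I_n -> bool}) ((Sv (walk s) == 0)%:R : R).
Definition cc (R : realType) m : R := ('C(m.*2, m))%:R / 4 ^+ m.
Definition aa (R : realType) n : R := Tsum R n / 2 ^+ n.

Lemma absR_step (R : realType) (x : int) :
  absR R (x + 1) + absR R (x - 1) = 2 * absR R x + 2 * (x == 0)%:R.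
Proof.
rewrite /absR rmorphD rmorphB /= !rmorph1.
case: (ltrgt0P x) => [hx|hx|hx].
- have hy : 1 <= (x%:~R : R) by rewrite -[1 : R]/((1%:Z)%:~R) ler_int; lia.
  rewrite !ger0_norm /=; lra.
- have hy : (x%:~R : R) <= -1 by rewrite -[-1 : R]/((-1)%:~R) ler_int; lia.
  rewrite !ler0_norm /=; lra.
- have -> : x = 0 by [].
  by rewrite /= add0r sub0r normrN normr1 normr0; lra.
Qed.

Lemma TsumS (R : realType) n : Tsum R n.+1 = 2 * Tsum R n + 2 * Zc R n.
Proof.
rewrite /Tsum /Zc sum_ffunS.
under eq_bigr => s _ do rewrite !walk_ext step_sum absR_step.
by rewrite big_split /= -!mulr_sumr.
Qed.

Lemma Zc_formula (R : realType) n :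
  Zc R n = \sum_(j < n.+1) ('C(n, j))%:R * ((2 * (j : nat)%:Z - (n : nat)%:Z == 0)%:R : R).
Proof. by rewrite /Zc (@sum_walk R n (fun z => ((z == 0)%:R : R))). Qed.

Lemma Zc_even (R : realType) m : Zc R m.*2 = ('C(m.*2, m))%:R.
Proof.
rewrite Zc_formula.
have hm : (m < m.*2.+1)%N by rewrite ltnS -addnn leq_addr.
rewrite (bigD1 (Ordinal hm)) //= big1 ?addr0.
  have -> : (2 * (m%:Z) - (m.*2)%:Z == 0) = true by apply/eqP; lia.
  by rewrite mulr1.
move=> j hj; have -> : (2 * ((j : nat)%:Z) - (m.*2)%:Z == 0) = false.
  apply/negbTE; apply/negP => /eqP h; move/negP: hj; apply; apply/eqP/val_inj => /=; lia.
by rewrite mulr0.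
Qed.

Lemma Zc_odd (R : realType) m : Zc R m.*2.+1 = 0.
Proof.
rewrite Zc_formula big1 // => j _.
have -> : (2 * ((j : nat)%:Z) - (m.*2.+1)%:Z == 0) = false.
  by apply/negbTE; apply/negP => /eqP h; lia.
by rewrite mulr0.
Qed.

Lemma binc m : ('C(m.*2.+2, m.+1) * m.+1 * m.+1 = m.*2.+2 * m.*2.+1 * 'C(m.*2, m))%N.
Proof.
have h1 := mul_bin_diag m.*2.+2 m.
have h2 := mul_bin_diag m.*2.+1 m.
have h3 := mul_bin_left m.*2.+1 m.
rewrite /= in h1 h2.
have e : (m.*2.+1 - m = m.+1)%N by rewrite -addnn; lia.
rewrite e in h3.
nia.
Qed.

Lemma ccS (R : realType) m : cc R m.+1 = cc R m * (m.*2.+1)%:R / (m.*2.+2)%:R.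
Proof.
rewrite /cc.
have h : ('C(m.*2.+2, m.+1))%:R = (m.*2.+2 * m.*2.+1 * 'C(m.*2, m))%:R / ((m.+1)%:R ^+ 2) :> R.
  by rewrite -binc !natrM; field; rewrite ?expf_neq0 ?pnatr_eq0.
rewrite doubleS h [4 ^+ _.+1]exprS -!mul2n.
have hm : 0 <= (m%:R : R) := ler0n _ _.
field; apply/and3P; split; [apply: lt0r_neq0; lra | by rewrite expf_neq0 | apply: lt0r_neq0; lra].
Qed.

Lemma Tsum0 (R : realType) : Tsum R 0 = 0.
Proof. by rewrite /Tsum big1 // => s _; rewrite /absR /Sv /= normr0. Qed.

Lemma aaS (R : realType) n : aa R n.+1 = aa R n + Zc R n / 2 ^+ n.
Proof. rewrite /aa TsumS exprS; field; exact: expf_neq0. Qed.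

Lemma pow4 (R : realType) m : (2 : R) ^+ m.*2 = 4 ^+ m.
Proof. by rewrite -mul2n exprM; congr (_ ^+ _); rewrite expr2; lra. Qed.

Lemma aa_formula (R : realType) m :
  aa R m.*2 = (m.*2)%:R * cc R m /\ aa R m.*2.+1 = (m.*2.+1)%:R * cc R m.
Proof.
elim: m => [|m [IH1 IH2]].
  rewrite /= aaS /aa Tsum0 Zc_even /cc /= !expr0 mul0r add0r !divr1 mul1r.
  by split => //; rewrite double0 mul0r.
have E2 : aa R m.*2.+2 = (m.*2.+1)%:R * cc R m.
  by rewrite aaS Zc_odd mul0r addr0.
have E1 : aa R (m.+1).*2 = (m.+1).*2%:R * cc R m.+1.
  rewrite doubleS E2 ccS -!mul2n.
  have hm : 0 <= (m%:R : R) := ler0n _ _.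
  field; apply: lt0r_neq0; lra.
split => //.
rewrite aaS E1 Zc_even pow4 /cc -!mul2n.
by rewrite -[(2 * m.+1).+1]addn1 natrD; ring.
Qed.

Lemma cc_gt0 (R : realType) m : 0 < cc R m.
Proof. by rewrite /cc divr_gt0 ?exprn_gt0 ?ltr0n ?bin_gt0 // -addnn leq_addr. Qed.

Fixpoint Fw (R : realType) (n : nat) : R -> R :=
  match n with
  | 0 => id
  | 1 => - (@cos R)
  | n'.+2 => ((- (n'.+2)%:R^-1) \*: ((@sin R) ^+ n'.+1 * (@cos R))) +
             (((n'.+1)%:R / (n'.+2)%:R) \*: @Fw R n')
  end.

Lemma Fw_derive (R : realType) n (x : R) : is_derive x 1 (@Fw R n) (sin x ^+ n).
Proof.
suff : is_derive x 1 (@Fw R n) (sin x ^+ n) /\ is_derive x 1 (@Fw R n.+1) (sin x ^+ n.+1)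
  by case.
elim: n => [|n [IH1 IH2]].
  split; first by rewrite expr0; exact: is_derive_id.
  rewrite /= expr1; apply: is_derive_eq; first by rewrite opprK.
split => //.
apply: is_derive_eq.
have hc := cos2Dsin2 x.
rewrite exprfctE /= /GRing.scale /=.
have hn : (n.+2%:R : R) != 0 by rewrite pnatr_eq0.
apply/eqP; rewrite -subr_eq0; apply/eqP.
transitivity (- ((n.+1)%:R / (n.+2)%:R) * sin x ^+ n * (cos x ^+ 2 + sin x ^+ 2 - 1)); last first.
  by rewrite hc subrr mulr0.
rewrite /= !exprS.
by field.
Qed.

Definition Ww (R : realType) n : R := @Fw R n (pi / 2) - @Fw R n 0.

Lemma Ww0 (R : realType) : Ww R 0 = pi / 2.
Proof. by rewrite /Ww /= subr0. Qed.

Lemma Ww1 (R : realType) : Ww R 1 = 1.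
Proof. by rewrite /Ww /= !fctE cos_pihalf cos0; lra. Qed.

Lemma WwS (R : realType) n : Ww R n.+2 = (n.+1)%:R / (n.+2)%:R * Ww R n.
Proof.
rewrite /Ww /= !fctE /GRing.scale /= cos_pihalf sin0 expr0n /=.
rewrite /GRing.scale /=; ring.
Qed.

Lemma Ww_decr (R : realType) n : Ww R n.+1 <= Ww R n.
Proof.
pose G : R -> R := (@Fw R n - @Fw R n.+1 : R -> R).
have dG : forall x : R, is_derive x 1 G (sin x ^+ n - sin x ^+ n.+1).
  move=> x; apply: is_deriveB; exact: Fw_derive.
have hpi : 0 < pi / 2 :> R by rewrite divr_gt0 ?pi_gt0.
have cG : {within `[0, pi / 2], continuous G}.
  apply: continuous_subspaceT => x.
  by apply/differentiable_continuous/derivable1_diffP; apply: ex_derive; exact: dG.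
have [c hc hG] := MVT hpi (fun x _ => dG x) cG.
have hs : 0 <= sin c.
  apply: sin_ge0_pi; move: hc; rewrite in_itv /= => /andP [h1 h2].
  apply/andP; split; [exact: ltW | ].
  have := pi_gt0 R; lra.
have hs1 := sin_le1 c.
have : 0 <= (sin c ^+ n - sin c ^+ n.+1) * (pi / 2 - 0).
  apply: mulr_ge0; last lra.
  by rewrite exprS subr_ge0 ler_piMl // exprn_ge0.
rewrite -hG /G /Ww !fctE.
lra.
Qed.

Lemma inv_le1 (R : realType) (x y : R) : 0 < x -> x^-1 <= y -> 1 <= x * y.
Proof.
move=> hx h; have := ler_wpM2l (ltW hx) h.
by rewrite mulfV // gt_eqF.
Qed.

Lemma le_inv1 (R : realType) (x y : R) : 0 < x -> y <= x^-1 -> x * y <= 1.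
Proof.
move=> hx h; have := ler_wpM2l (ltW hx) h.
by rewrite mulfV // gt_eqF.
Qed.

Lemma Ww_cc (R : realType) m :
  Ww R m.*2 = cc R m * (pi / 2) /\ Ww R m.*2.+1 = ((m.*2.+1)%:R * cc R m)^-1.
Proof.
elim: m => [|m [IH1 IH2]].
  by rewrite /= Ww0 Ww1 /cc /= expr0 divr1 !mul1r invr1.
have hc := cc_gt0 R m.
have hm : 0 <= (m%:R : R) := ler0n _ _.
split.
  rewrite doubleS WwS IH1 ccS -!mul2n.
  by field; apply: lt0r_neq0; lra.
rewrite doubleS WwS IH2 ccS -!mul2n.
field; rewrite ?gt_eqF //; apply/and3P; split; apply: lt0r_neq0; lra.
Qed.

Lemma wallisA (R : realType) m : 2 <= pi * cc R m ^+ 2 * (m.*2.+1)%:R.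
Proof.
have [h1 h2] := Ww_cc R m.
have := Ww_decr R m.*2; rewrite h1 h2 => h.
have hc := cc_gt0 R m.
have hm : 0 < ((m.*2.+1)%:R : R) by rewrite ltr0n.
have := inv_le1 (mulr_gt0 hm hc) h.
move=> h'; have := pi_gt0 R => hp.
nra.
Qed.

Lemma wallisB (R : realType) m : pi * cc R m.+1 ^+ 2 * (m.+1)%:R <= 1.
Proof.
have [h1 h2] := Ww_cc R m.
have [h3 h4] := Ww_cc R m.+1.
have := Ww_decr R m.*2.+1; rewrite doubleS in h3; rewrite h3 h2 => h.
have hc := cc_gt0 R m.
have hc1 := cc_gt0 R m.+1.
have E : cc R m = cc R m.+1 * (m.*2.+2)%:R / (m.*2.+1)%:R.
  rewrite ccS -!mul2n; have hm : 0 <= (m%:R : R) := ler0n _ _.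
  by field; apply/andP; split; apply: lt0r_neq0; lra.
have E2 : (m.*2.+1)%:R * cc R m = (m.*2.+2)%:R * cc R m.+1.
  rewrite E -!mul2n; have hm : 0 <= (m%:R : R) := ler0n _ _.
  by field; apply: lt0r_neq0; lra.
rewrite E2 in h.
have hm : 0 < ((m.*2.+2)%:R : R) by rewrite ltr0n.
have := le_inv1 (mulr_gt0 hm hc1) h.
have e : ((m.*2.+2)%:R : R) = 2 * (m.+1)%:R by rewrite -mul2n -natrM; congr (_%:R); lia.
rewrite e.
move=> h'; nra.
Qed.

Lemma pi_le4 (R : realType) : pi <= 4 :> R.
Proof.
have := wallisB R 0.
have -> : cc R 1 = 2^-1 by rewrite /cc /= expr1 (_ : 'C(1.*2, 1) = 2%N) //; lra.
by move=> h; nra.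
Qed.

Lemma aa_bound (R : realType) n : `|pi * aa R n ^+ 2 - 2 * n%:R| <= 4.
Proof.
have hp := pi_gt0 R.
have h4 := pi_le4 R.
rewrite -(odd_double_half n); set m := n./2.
have [E1 E2] := aa_formula R m.
have hA := wallisA R m.
have hc := cc_gt0 R m.
have hm : 0 <= (m%:R : R) := ler0n _ _.
have hB : (0 < m)%N -> pi * cc R m ^+ 2 * m%:R <= 1.
  by case: (m) => [//|k] _; exact: wallisB.
case: (odd n) => /=.
- have e1 : (((2 * m).+1)%:R : R) = 2 * m%:R + 1 by rewrite -[(2 * m).+1]addn1 natrD natrM.
  rewrite add1n E2 -!mul2n e1 in hA *.
  case: (posnP m) => [m0|mp].
    rewrite m0 /= in hA *.
    have hc0 : cc R 0 = 1 by rewrite /cc /= expr0 divr1.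
    rewrite hc0 in hA *; rewrite ler_norml; apply/andP; split; nra.
  have := hB mp => hB'.
  rewrite ler_norml; apply/andP; split.
    nra.
  have hm1 : 1 <= (m%:R : R) by rewrite ler1n.
  nra.
- have e1 : (((2 * m).+1)%:R : R) = 2 * m%:R + 1 by rewrite -[(2 * m).+1]addn1 natrD natrM.
  rewrite add0n E1 -!mul2n e1 natrM in hA *.
  case: (posnP m) => [m0|mp].
    by rewrite m0 /= !(mulr0, mul0r) expr0n /= mulr0 subrr normr0.
  have := hB mp => hB'.
  rewrite ler_norml; apply/andP; split; nra.
Qed.

Lemma lim_aux (R : realType) (u : nat -> R) (K : R) :
  (forall n, (0 < n)%N -> `|u n - 1| <= K / Num.sqrt n%:R) -> u @ \oo --> (1 : R).
Proof.
move=> hu; apply/cvgrPdist_lt => e he.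
pose N := Num.truncn ((K / e) ^+ 2).
apply: filterS (nbhs_infty_gt N) => n hn.
have hn0 : (0 < n)%N by case: (n) hn.
have hN : (K / e) ^+ 2 < n%:R.
  apply: (lt_le_trans (truncnS_gt _)); rewrite ler_nat; exact: hn.
have hr : 0 < Num.sqrt (n%:R : R) by rewrite sqrtr_gt0 ltr0n.
have hr2 : Num.sqrt (n%:R : R) ^+ 2 = n%:R by rewrite sqr_sqrtr // ler0n.
have hK : K / Num.sqrt n%:R < e.
  rewrite ltr_pdivrMr //.
  case: (lerP K 0) => hK0; first by nra.
  have hKe : 0 < K / e by rewrite divr_gt0.
  have : K / e < Num.sqrt n%:R.
    rewrite -hr2 in hN; nra.
  rewrite ltr_pdivrMr // => h; nra.
rewrite distrC; exact: (le_lt_trans (hu n hn0) hK).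
Qed.

Local Open Scope complex_scope.

Section Mat.
Variables (R : realType) (vp ph : R).
Let c := coshR vp.
Let s := sinhR vp.
Let C := cos ph.
Let S := sin ph.

Lemma MA00 : MA vp ph 0 0 = 0 +i* c.
Proof. by rewrite mxE /=; simpc. Qed.
Lemma MA01 : MA vp ph 0 1 = (C * s) +i* (S * s).
Proof. by rewrite mxE /= /cexpi; simpc. Qed.
Lemma MA10 : MA vp ph 1 0 = (C * s) +i* (- (S * s)).
Proof. by rewrite mxE /= /cexpi cosN sinN; simpc. Qed.
Lemma MA11 : MA vp ph 1 1 = 0 +i* (- c).
Proof. by rewrite mxE /=; simpc. Qed.
Lemma MB00 : MB R 0 0 = 0 +i* 1.
Proof. by rewrite mxE /=. Qed.
Lemma MB01 : MB R 0 1 = 0.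
Proof. by rewrite mxE /=. Qed.
Lemma MB10 : MB R 1 0 = 0.
Proof. by rewrite mxE /=. Qed.
Lemma MB11 : MB R 1 1 = 0 +i* (-1).
Proof. by rewrite mxE /=; simpc. Qed.

Definition ra (w : R) := (w + w^-1) / 2.
Definition rb (w : R) := (w^-1 - w) / 2.
Definition rowE (w : R) : R[i] * R[i] :=
  (ra w +i* 0, (- (S * rb w)) +i* (C * rb w)).
Definition rowO (w : R) : R[i] * R[i] :=
  (0 +i* ra w, (C * rb w) +i* (S * rb w)).
Definition rowst (st : int * bool) : R[i] * R[i] :=
  let w := expR (st.1%:~R * vp) in if st.2 then rowO w else rowE w.
Definition Gm (b : bool) : 'M[R[i]]_2 := if b then MA vp ph else MB R.

Lemma eq_cert (x y k : R) : x - y = k * (C ^+ 2 + S ^+ 2 - 1) -> x = y.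
Proof. by rewrite /C /S cos2Dsin2 subrr mulr0 => /eqP; rewrite subr_eq0 => /eqP. Qed.

Let E := expR vp.
Lemma hE : E != 0. Proof. by rewrite gt_eqF // expR_gt0. Qed.
Lemma cE : c = (E + E^-1) / 2. Proof. by rewrite /c /coshR expRN. Qed.
Lemma sE : s = (E - E^-1) / 2. Proof. by rewrite /s /sinhR expRN. Qed.

Lemma rowst_step st b : exists t : R[i], (t = 1 \/ t = -1) /\
   (rowst st).1 * Gm b 0 0 + (rowst st).2 * Gm b 1 0 = t * (rowst (step st b)).1 /\
   (rowst st).1 * Gm b 0 1 + (rowst st).2 * Gm b 1 1 = t * (rowst (step st b)).2.
Proof.
case: st => k p.
set w := expR (k%:~R * vp).
have hw : w != 0 by rewrite gt_eqF // expR_gt0.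
case: p; case: b; rewrite /rowst /Gm /step /= -/w
  ?MA00 ?MA01 ?MA10 ?MA11 ?MB00 ?MB01 ?MB10 ?MB11.
- exists (-1); split; first by right.
  have -> : expR ((k + 1)%:~R * vp) = w * E by rewrite rmorphD /= mulrDl mul1r expRD.
  rewrite !mulN1r /rowO /rowE; simpc.
  split; congr (_ +i* _).
  + apply: (eq_cert (k := rb w * s)); rewrite /ra /rb cE sE.
    by field; rewrite ?hw ?hE ?(mulf_neq0 hw hE).
  + ring.
  + rewrite /ra /rb cE sE.
    by field; rewrite ?hw ?hE ?(mulf_neq0 hw hE).
  + rewrite /ra /rb cE sE.
    by field; rewrite ?hw ?hE ?(mulf_neq0 hw hE).
- exists (-1); split; first by right.
  by rewrite !mulN1r /rowO /rowE; simpc.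
- exists 1; split; first by left.
  have -> : expR ((k - 1)%:~R * vp) = w * E^-1.
    by rewrite rmorphB /= mulrBl mul1r expRD expRN.
  rewrite !mul1r /rowO /rowE; simpc.
  have hwE : w / E != 0 by rewrite mulf_neq0 ?invr_eq0 ?hE.
  split; congr (_ +i* _).
  + ring.
  + apply: (eq_cert (k := rb w * s)); rewrite /ra /rb cE sE.
    by field; rewrite ?hw ?hE ?(mulf_neq0 hw hE).
  + rewrite /ra /rb cE sE.
    by field; rewrite ?hw ?hE ?(mulf_neq0 hw hE).
  + rewrite /ra /rb cE sE.
    by field; rewrite ?hw ?hE ?(mulf_neq0 hw hE).
- exists 1; split; first by left.
  by rewrite !mul1r /rowO /rowE; simpc.
Qed.

Lemma sumI2 (F : 'I_2 -> R[i]) : \sum_(k < 2) F k = F 0 + F 1.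
Proof. by rewrite big_ord_recl big_ord1; congr (F _ + F _); apply: val_inj. Qed.

Lemma PiS n (sq : {ffun 'I_n.+1 -> bool}) :
  Pi vp ph sq = Pi vp ph (restr sq) * Gm (sq ord_max).
Proof.
rewrite /Pi big_ord_recr /=; congr (_ * _).
by apply: eq_bigr => k _; rewrite ffunE.
Qed.

Lemma Pi_row n (sq : {ffun 'I_n -> bool}) : exists t : R[i], (t = 1 \/ t = -1) /\
  Pi vp ph sq 0 0 = t * (rowst (walk sq)).1 /\ Pi vp ph sq 0 1 = t * (rowst (walk sq)).2.
Proof.
elim: n sq => [|n IH] sq.
  exists 1; split; first by left.
  rewrite /Pi big_ord0 /rowst /= mul0r expR0 /rowE /ra /rb invr1 subrr mul0r mulr0 oppr0 !mul1r.
  rewrite !mxE /=; split; apply/eqP; rewrite eq_complex /=; apply/andP; split; apply/eqP; lra.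
have [t [ht [h0 h1]]] := IH (restr sq).
have [t' [ht' [h0' h1']]] := rowst_step (walk (restr sq)) (sq ord_max).
exists (t * t'); split.
  by case: ht => ->; case: ht' => ->; rewrite ?mulr1 ?mulrN1 ?opprK; [left|right|right|left].
rewrite PiS /= !mxE !sumI2 h0 h1 -!mulrA -!mulrDr h0' h1'.
by split; rewrite mulrA.
Qed.

Definition Qf (st : int * bool) : R :=
  let w := expR (st.1%:~R * vp) in
  (w ^+ 2 + w ^-2 + (if st.2 then - S else S) * (w ^-2 - w ^+ 2)) / 2.

Lemma cabs_row st : cabs ((rowst st).1 - (rowst st).2) = Num.sqrt (Qf st).
Proof.
case: st => k p; rewrite /rowst /Qf /=.
set w := expR (k%:~R * vp).
have hw : w != 0 by rewrite gt_eqF // expR_gt0.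
case: p; rewrite /rowO /rowE /cabs; simpc; rewrite /ComplexField.Normc.normc; congr (Num.sqrt _).
  apply: (eq_cert (k := rb w ^+ 2)); rewrite /ra /rb.
  by field.
apply: (eq_cert (k := rb w ^+ 2)); rewrite /ra /rb.
by field.
Qed.

Lemma S_bound : S ^+ 2 != 1 -> `|S| < 1.
Proof.
move=> hS.
have h1 : S ^+ 2 <= 1 by have := cos2Dsin2 ph; rewrite -/C -/S; have := sqr_ge0 C; lra.
have h2 : S ^+ 2 < 1 by rewrite lt_neqAle hS h1.
rewrite ltr_norml; apply/andP; split; nra.
Qed.

Lemma Qf_bounds st : S ^+ 2 != 1 ->
  (1 - `|S|) / 2 * expR (2 * `|st.1%:~R * vp|) <= Qf st <= 2 * expR (2 * `|st.1%:~R * vp|).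
Proof.
move=> hS; have hS1 := S_bound hS.
case: st => k p; rewrite /Qf /=.
set y := k%:~R * vp.
set w := expR y.
have hu : w ^+ 2 = expR (2 * y) by rewrite expr2 -expRD; congr expR; ring.

rewrite hu -expRN.
set u := expR (2 * y). set v := expR (- (2 * y)). set T := expR (2 * `|y|).
have u0 : 0 < u by apply: expR_gt0.
have v0 : 0 < v by apply: expR_gt0.
have uT : u <= T by rewrite ler_expR; have := ler_norm y; lra.
have vT : v <= T by rewrite ler_expR; have := ler_normr y; rewrite lerNl; move=> _; have := ler_norm (- y); rewrite normrN; lra.
have Tuv : T <= u + v.
  case: (lerP 0 y) => hy.
    by rewrite /T ger0_norm // -/u; lra.
  by rewrite /T ltr0_norm // mulrN -/v; lra.
have hSa : - `|S| <= S <= `|S| by rewrite -ler_norml.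
case/andP: hSa => hSa1 hSa2.
case: p; apply/andP; split; nra.
Qed.

Definition K0 : R := (ln 2 - ln ((1 - `|S|) / 2)) / 2 + `|vp| / 2.

Lemma ln_sqrt (x : R) : 0 < x -> ln (Num.sqrt x) = ln x / 2.
Proof.
move=> hx; have hs : 0 < Num.sqrt x by rewrite sqrtr_gt0.
have := lnXn 2 hs; rewrite sqr_sqrtr ?ltW // => ->.
by rewrite mulr2n; field.
Qed.

Lemma h_bound st : S ^+ 2 != 1 ->
  `|ln (Num.sqrt (Qf st)) - `|vp| / 2 * `|((Sv st)%:~R : R)| | <= K0.
Proof.
case: st => k p hS; have hS1 := S_bound hS.
have [hl hu] := andP (Qf_bounds (k, p) hS).
rewrite /= in hl hu.
set T := expR _ in hl hu.
have T0 : 0 < T by apply: expR_gt0.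
have m0 : 0 < (1 - `|S|) / 2 by rewrite divr_gt0 // subr_gt0.
have Q0 : 0 < Qf (k, p) by apply: lt_le_trans hl; rewrite mulr_gt0.
rewrite ln_sqrt //.
have L1 : ln ((1 - `|S|) / 2 * T) <= ln (Qf (k, p)).
  by rewrite ler_ln // posrE mulr_gt0.
have L2 : ln (Qf (k, p)) <= ln (2 * T).
  by rewrite ler_ln // posrE mulr_gt0.
rewrite lnM ?posrE // /T expRK in L1.
rewrite lnM ?posrE // /T expRK in L2.
have ln2 : 0 <= ln (2 : R) by apply: ln_ge0; lra.
have lnm : ln ((1 - `|S|) / 2) <= 0 by apply: ln_le0; have := normr_ge0 S; lra.
rewrite /= normrM in L1 L2.
set A := `|(k%:~R : R)| in L1 L2.
set V := `|vp| in L1 L2 *.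
have hV : 0 <= V by apply: normr_ge0.
have hA : 0 <= A by apply: normr_ge0.
have hN : `| `|((Sv (k, p))%:~R : R)| - 2 * A | <= 1.
  rewrite /Sv /= rmorphD rmorphM /= /A.
  have hp1 : 0 <= ((p : nat)%:Z%:~R : R) by case: (p) => /=; rewrite ?rmorph0 ?rmorph1; lra.
  have hp2 : ((p : nat)%:Z%:~R : R) <= 1 by case: (p) => /=; rewrite ?rmorph0 ?rmorph1; lra.
  have := normr_ge0 (k%:~R : R).
  have e2 : (2%:~R : R) = 2 by [].
  rewrite e2.
  set K := (k%:~R : R); set P := ((p : nat)%:Z%:~R : R) in hp1 hp2 *.
  move=> _.
  rewrite ler_norml; apply/andP; split.
    have := ler_normD (2 * K + P) (- P); rewrite addrK normrN normrM (ger0_norm (ler0n _ 2)) (ger0_norm hp1).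
    lra.
  have := ler_normD (2 * K) P; rewrite normrM (ger0_norm (ler0n _ 2)) (ger0_norm hp1).
  lra.
set N := `|_| in hN *.
rewrite ler_norml in hN; case/andP: hN => hN1 hN2.
rewrite /K0 -/V ler_norml; apply/andP; split; nra.
Qed.
End Mat.

Local Open Scope complex_scope.

Lemma cabsN (R : realType) (z : R[i]) : cabs (- z) = cabs z.
Proof. by case: z => a b; rewrite /cabs; simpc; rewrite /ComplexField.Normc.normc !sqrrN. Qed.

Lemma Elog_walk (R : realType) (vp ph : R) n :
  Elog vp ph n = (2 ^+ n)^-1 * \sum_(s : {ffun 'I_n -> bool}) ln (Num.sqrt (Qf vp ph (walk s))).
Proof.
rewrite /Elog; congr (_ * _); apply: eq_bigr => s _.
have [t [ht [h0 h1]]] := Pi_row vp ph s.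
rewrite /alpha /beta h0 h1 -mulrBr -cabs_row.
by case: ht => ->; rewrite ?mul1r ?mulN1r ?cabsN.
Qed.

Lemma Elog_aa (R : realType) (vp ph : R) n : sin ph ^+ 2 != 1 ->
  `|Elog vp ph n - `|vp| / 2 * aa R n| <= K0 vp ph.
Proof.
move=> hS.
have -> : Elog vp ph n - `|vp| / 2 * aa R n = (2 ^+ n)^-1 *
   \sum_(s : {ffun 'I_n -> bool}) (ln (Num.sqrt (Qf vp ph (walk s))) - `|vp| / 2 * absR R (Sv (walk s))).
  rewrite Elog_walk /aa /Tsum sumrB mulrBr -mulr_sumr; ring.
rewrite /absR.
rewrite normrM ger0_norm ?invr_ge0 ?exprn_ge0 //.
apply: (le_trans (ler_wpM2l _ (ler_norm_sum _ _ _))); first by rewrite invr_ge0 exprn_ge0.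
apply: (le_trans (ler_wpM2l _ (ler_sum _ (fun s _ => h_bound vp (walk s) hS)))).
  by rewrite invr_ge0 exprn_ge0.
rewrite sumr_const card_ffun card_bool card_ord -[K0 vp ph *+ _]mulr_natr natrX.
by rewrite mulrCA mulVf ?mulr1 // expf_neq0.
Qed.

Local Close Scope complex_scope.
Unset Implicit Arguments.

Theorem mainTheorem7 (R : realType) (vp ph : R) :
  vp != 0 -> sin ph ^+ 2 != 1 ->
  exists g : R, 0 < g /\
    (fun n : nat => Elog vp ph n / (g * Num.sqrt (n%:R))) @ \oo --> (1 : R).
Proof.
move=> hvp hS.
have hpi := pi_gt0 R.
set r := Num.sqrt (pi / 2 : R).
have r0 : 0 < r by rewrite sqrtr_gt0 divr_gt0.
have r2 : r ^+ 2 = pi / 2 by rewrite sqr_sqrtr // ltW // divr_gt0.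
set V := `|vp|.
have V0 : 0 < V by rewrite normr_gt0.
pose g := V / (2 * r).
have g0 : 0 < g by rewrite divr_gt0 // mulr_gt0.
exists g; split => //.
apply: (@lim_aux R _ (2 + K0 vp ph / g)) => n hn.
set q := Num.sqrt (n%:R : R).
have n1 : 1 <= (n%:R : R) by rewrite ler1n.
have q0 : 0 < q by rewrite sqrtr_gt0; lra.
have q2 : q ^+ 2 = n%:R by rewrite sqr_sqrtr //; lra.
have q1 : 1 <= q by nra.
have hE : `|Elog vp ph n - `|vp| / 2 * aa R n| <= K0 vp ph by apply: Elog_aa.
set E := Elog vp ph n in hE *.
set A := aa R n in hE.
have A0 : 0 <= A.
  by rewrite /A /aa /Tsum divr_ge0 ?exprn_ge0 // sumr_ge0 // => s _; exact: normr_ge0.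
have hB := aa_bound R n; rewrite -/A in hB.
set y := r * A / q.
have y0 : 0 <= y by rewrite /y; apply: divr_ge0; [apply: mulr_ge0; [exact: ltW|exact: A0]|exact: ltW].
have ey : y ^+ 2 - 1 = (pi * A ^+ 2 - 2 * n%:R) / (2 * q ^+ 2).
  rewrite /y -q2 expr_div_n exprMn r2.
  by field; rewrite gt_eqF.
set Z := `|y ^+ 2 - 1|.
have hZ : Z * (2 * q ^+ 2) <= 4.
  rewrite /Z ey normrM normfV (ger0_norm (ltW (mulr_gt0 _ (exprn_gt0 2 q0)))) //.
  by rewrite mulfVK // gt_eqF // mulr_gt0 // exprn_gt0.
have Z0 : 0 <= Z by apply: normr_ge0.
have hyZ : `|y - 1| <= Z.
  rewrite /Z (_ : y ^+ 2 - 1 = (y - 1) * (y + 1)); last by ring.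
  rewrite normrM (ger0_norm (_ : 0 <= y + 1)); last lra.
  have := normr_ge0 (y - 1); nra.
have hy : `|y - 1| <= 2 / q.
  rewrite ler_pdivlMr //.
  have : Z * q <= 2 by nra.
  have := normr_ge0 (y - 1); nra.
have eu : E / (g * q) - 1 = (y - 1) + (E - V / 2 * A) / (g * q).
  rewrite /y /g; field.
  by rewrite !gt_eqF //=.
rewrite eu.
apply: (le_trans (ler_normD _ _)).
rewrite normrM normfV (ger0_norm (ltW (mulr_gt0 g0 q0))).
have hK : `|E - V / 2 * A| / (g * q) <= K0 vp ph / (g * q).
  by apply: ler_wpM2r => //; rewrite invr_ge0 ltW // mulr_gt0.
have -> : (2 + K0 vp ph / g) / q = 2 / q + K0 vp ph / (g * q).
  by field; rewrite !gt_eqF.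
exact: lerD.
Qed.
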